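(* Let $J=\{i_1,\dots,i_n\}\subset\mathbb N_+$ be finite with $n\ge1$. If $n=2t+1$, then $M_J$ is stably isomorphic as a $\Lambda(Q_1,P)$-module to a direct sum of $2^t$ copies of $\Lambda(Q_1)=\Lambda(Q_1,P)/(P)$. If $n=2t$, then $M_J$ is stably isomorphic to a direct sum of $2^{t-1}$ copies of $M_{[2]}$.
   Context: Over $\mathbb F_2$, $\Lambda(Q_1,P)$ is the exterior algebra on $Q_1,P$, a Hopf algebra with $Q_1$ primitive and $\Delta(P)=P\otimes1+Q_1\otimes Q_1+1\otimes P$. For $i\in\mathbb N_+$, $M_i$ has basis $t_i,x_i$ with $Q_1(x_i)=t_i$, $Q_1(t_i)=0$, $P=0$; for finite $J\subset\mathbb N_+$, $M_J=\bigotimes_{j\in J}M_j$ with the action through the coproduct; $[2]=\{1,2\}$. Two modules $M,N$ are stably isomorphic if $F\oplus M\cong F'\oplus N$ for free $\Lambda(Q_1,P)$-modules $F,F'$. *)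

(* Defs.v *)
(* Finite-dimensional modules over Lambda(Q1,P) over F_2,
   represented concretely by matrices acting on ROW vectors (v |-> v *m Q). *)
From HB Require Import structures.
From mathcomp Require Import all_boot all_order all_algebra.
Set Implicit Arguments. Unset Strict Implicit. Unset Printing Implicit Defensive.
Import GRing.Theory.
Local Open Scope ring_scope.

Notation F2 := 'F_2.

Record lmod := LMod { ldim : nat; lQ : 'M[F2]_ldim; lP : 'M[F2]_ldim }.

Definition idx_pair (m n : nat) (k : 'I_(m * n)) : 'I_m * 'I_n :=
  enum_val (cast_ord (esym (mxvec_cast m n)) k).

Definition kron (m1 n1 m2 n2 : nat) (A : 'M[F2]_(m1, n1)) (B : 'M[F2]_(m2, n2))
  : 'M[F2]_(m1 * m2, n1 * n2) :=
  \matrix_(i, j) (A (idx_pair i).1 (idx_pair j).1 * B (idx_pair i).2 (idx_pair j).2).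

(* Tensor product of modules, action through the coproduct
   Delta(Q1) = Q1 (x) 1 + 1 (x) Q1,  Delta(P) = P (x) 1 + Q1 (x) Q1 + 1 (x) P. *)
Definition ltensor (M N : lmod) : lmod :=
  @LMod (ldim M * ldim N)
    (kron (lQ M) 1%:M + kron 1%:M (lQ N))
    (kron (lP M) 1%:M + kron (lQ M) (lQ N) + kron 1%:M (lP N)).

Definition ldsum (M N : lmod) : lmod :=
  @LMod (ldim M + ldim N) (block_mx (lQ M) 0 0 (lQ N)) (block_mx (lP M) 0 0 (lP N)).

Definition lzero : lmod := @LMod 0 0 0.
Fixpoint lnsum (k : nat) (M : lmod) : lmod :=
  if k is k'.+1 then ldsum M (lnsum k' M) else lzero.

Definition lunit : lmod := @LMod 1 0 0.

Definition Qmat2 : 'M[F2]_2 := \matrix_(i, j) (if (i == 1 :> nat) && (j == 0 :> nat) then 1 else 0).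

(* M_i : basis (t_i, x_i), Q1 x_i = t_i, Q1 t_i = 0, P = 0. (Independent of i.) *)
Definition Mi (i : nat) : lmod := @LMod 2 Qmat2 0.

(* M_J = tensor product of the M_j, j in J (J given as a duplicate-free list). *)
Definition MJ (J : seq nat) : lmod := foldr (fun j M => ltensor (Mi j) M) lunit J.

(* Lambda(Q1) = Lambda(Q1,P)/(P): basis (1, Q1), P acting as 0. *)
Definition LamQ1 : lmod := @LMod 2 Qmat2 0.

(* The free module of rank one Lambda(Q1,P), basis (1, Q1, P, Q1 P). *)
Definition LamFree : lmod :=
  @LMod 4
    (\matrix_(i, j) (if ((i == 0 :> nat) && (j == 1 :> nat)) || ((i == 2 :> nat) && (j == 3 :> nat)) then 1 else 0))
    (\matrix_(i, j) (if ((i == 0 :> nat) && (j == 2 :> nat)) || ((i == 1 :> nat) && (j == 3 :> nat)) then 1 else 0)).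

Definition liso (M N : lmod) : Prop :=
  exists (A : 'M[F2]_(ldim M, ldim N)) (B : 'M[F2]_(ldim N, ldim M)),
    [/\ A *m B = 1%:M, B *m A = 1%:M, lQ M *m A = A *m lQ N & lP M *m A = A *m lP N].

(* Free modules are finite direct sums of copies of Lambda(Q1,P). *)
Definition stably_iso (M N : lmod) : Prop :=
  exists a b : nat, liso (ldsum (lnsum a LamFree) M) (ldsum (lnsum b LamFree) N).

(* Main.v *)
Require Import Defs.
From mathcomp Require Import all_boot all_order all_algebra.
Set Implicit Arguments. Unset Strict Implicit. Unset Printing Implicit Defensive.
Import GRing.Theory.
Local Open Scope ring_scope.


Lemma nth_ap (n : nat) : forall (m a k : nat), (k < m * n)%N ->
  nth (0%N, 0%N) [seq (x, y) | x <- iota a m, y <- iota 0 n] k = (a + k %/ n, k %% n)%N.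
Proof.
elim=> [|m IH] a k; first by rewrite mul0n.
rewrite mulSn /= => Hk.
rewrite nth_cat size_map size_iota.
case: ltnP => Hkn.
  rewrite (nth_map 0%N) ?size_iota // nth_iota // add0n.
  by rewrite divn_small // modn_small // addn0.
have n0 : (0 < n)%N by move: Hk; case: (n) => //; rewrite muln0.
rewrite IH; last by rewrite -(ltn_add2l n) subnKC.
rewrite -{3 4}(subnKC Hkn).
have -> : ((n + (k - n)) %/ n = 1 + (k-n) %/ n)%N by rewrite -divnMDl // mul1n.
rewrite modnDl.
by rewrite addSnnS add1n.
Qed.

Lemma idx_pairE m n (k : 'I_(m * n)) :
  val (idx_pair k).1 = (k %/ n)%N /\ val (idx_pair k).2 = (k %% n)%N.
Proof.
have Hs : map (fun p : 'I_m * 'I_n => (val p.1, val p.2)) (enum {: 'I_m * 'I_n})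
   = [seq (x, y) | x <- iota 0 m, y <- iota 0 n].
  rewrite enumT.
  rewrite unlock /=.
  rewrite /prod_enum -!val_enum_ord.
  elim: (enum 'I_m) => //= x s IHs.
  by rewrite map_cat IHs -!map_comp.
have Hsz : (val k < size (enum {: 'I_m * 'I_n}))%N.
  by rewrite -(size_map (fun p : 'I_m * 'I_n => (val p.1, val p.2))) Hs size_allpairs !size_iota ltn_ord.
rewrite /idx_pair /enum_val /=.
set x0 := enum_default _.
have H := congr1 (fun s => nth (val x0.1, val x0.2) s k) Hs.
rewrite /= (nth_map x0) // in H.
rewrite (set_nth_default (0%N,0%N)) ?size_allpairs ?size_iota ?ltn_ord // nth_ap ?ltn_ord // in H.
by case: H => -> ->.
Qed.


Definition b2F (b : bool) : F2 := b%:R.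
Lemma b2F_add a b : b2F a + b2F b = b2F (xorb a b).
Proof. by case: a; case: b; rewrite /b2F ?addr0 ?add0r //; apply/eqP. Qed.
Lemma b2F_mul a b : b2F a * b2F b = b2F (a && b).
Proof. by case: a; case: b; rewrite /b2F ?mulr0 ?mul0r ?mulr1. Qed.

Definition tomx m n (f : nat -> nat -> bool) : 'M[F2]_(m, n) := \matrix_(i, j) b2F (f i j).
Definition bsum n (h : nat -> bool) := foldr (fun k acc => xorb (h k) acc) false (iota 0 n).

Lemma tomx0 m n : (0 : 'M[F2]_(m, n)) = tomx m n (fun _ _ => false).
Proof. by apply/matrixP=> i j; rewrite !mxE. Qed.
Lemma tomx1 n : (1%:M : 'M[F2]_n) = tomx n n (fun i j => i == j).
Proof. by apply/matrixP=> i j; rewrite !mxE /b2F. Qed.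
Lemma tomxD m n f g : tomx m n f + tomx m n g = tomx m n (fun i j => xorb (f i j) (g i j)).
Proof. by apply/matrixP=> i j; rewrite !mxE b2F_add. Qed.
Lemma tomxM m n p f g : tomx m n f *m tomx n p g = tomx m p (fun i j => bsum n (fun k => f i k && g k j)).
Proof.
apply/matrixP=> i j; rewrite !mxE.
under eq_bigr do rewrite !mxE b2F_mul.
rewrite -(big_mkord xpredT (fun k => b2F (f i k && g k j))) /bsum /index_iota subn0.
elim: (iota 0 n) => [|k s IH]; first by rewrite big_nil.
by rewrite big_cons IH b2F_add.
Qed.

Lemma tomx_block m1 m2 n1 n2 a b c d :
  block_mx (tomx m1 n1 a) (tomx m1 n2 b) (tomx m2 n1 c) (tomx m2 n2 d) =
  tomx (m1 + m2) (n1 + n2) (fun i j => if (i < m1)%N then (if (j < n1)%N then a i j else b i (j - n1)%N)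
                 else (if (j < n1)%N then c (i - m1)%N j else d (i - m1)%N (j - n1)%N)).
Proof.
apply/matrixP=> i j; rewrite [RHS]mxE.
case: (split_ordP i) => i' ->; case: (split_ordP j) => j' ->;
  rewrite ?block_mxEul ?block_mxEur ?block_mxEdl ?block_mxEdr mxE /= ?ltn_ord ?ltnNge ?leq_addr /= ?addKn //.
Qed.

Lemma tomx_kron m1 n1 m2 n2 a b :
  kron (tomx m1 n1 a) (tomx m2 n2 b) =
  tomx (m1 * m2) (n1 * n2) (fun i j => a (i %/ m2)%N (j %/ n2)%N && b (i %% m2)%N (j %% n2)%N).
Proof.
apply/matrixP=> i j; rewrite !mxE b2F_mul.
by case: (idx_pairE i) => -> ->; case: (idx_pairE j) => -> ->.
Qed.

Definition mxchk m n (f g : nat -> nat -> bool) :=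
  all (fun i => all (fun j => f i j == g i j) (iota 0 n)) (iota 0 m).
Lemma mxchkP m n f g : mxchk m n f g -> tomx m n f = tomx m n g.
Proof.
move=> /allP H; apply/matrixP=> i j; rewrite !mxE.
have Hi : (val i \in iota 0 m) by rewrite mem_iota ltn_ord.
have Hj : (val j \in iota 0 n) by rewrite mem_iota ltn_ord.
by move: (H _ Hi) => /allP /(_ _ Hj) /eqP ->.
Qed.

Lemma Qmat2E : Qmat2 = tomx 2 2 (fun i j => (i == 1)%N && (j == 0)%N).
Proof. by apply/matrixP=> i j; rewrite !mxE /b2F; case: ifP. Qed.
Lemma LamFreeQ : lQ LamFree = tomx 4 4 (fun i j => ((i == 0)%N && (j == 1)%N) || ((i == 2)%N && (j == 3)%N)).
Proof. by apply/matrixP=> i j; rewrite !mxE /b2F; case: ifP. Qed.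
Lemma LamFreeP : lP LamFree = tomx 4 4 (fun i j => ((i == 0)%N && (j == 2)%N) || ((i == 1)%N && (j == 3)%N)).
Proof. by apply/matrixP=> i j; rewrite !mxE /b2F; case: ifP. Qed.

Definition bmx m n (s : seq (seq nat)) : 'M[F2]_(m, n) :=
  tomx m n (fun i j => nth 0%N (nth [::] s i) j == 1%N).


Lemma FQE : (\matrix_(i, j) (if ((i == 0 :> nat) && (j == 1 :> nat)) || ((i == 2 :> nat) && (j == 3 :> nat)) then 1 else 0) : 'M[F2]_4)
  = tomx 4 4 (fun i j => ((i == 0)%N && (j == 1)%N) || ((i == 2)%N && (j == 3)%N)).
Proof. by apply/matrixP=> i j; rewrite !mxE /b2F; case: ifP. Qed.
Lemma FPE : (\matrix_(i, j) (if ((i == 0 :> nat) && (j == 2 :> nat)) || ((i == 1 :> nat) && (j == 3 :> nat)) then 1 else 0) : 'M[F2]_4)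
  = tomx 4 4 (fun i j => ((i == 0)%N && (j == 2)%N) || ((i == 1)%N && (j == 3)%N)).
Proof. by apply/matrixP=> i j; rewrite !mxE /b2F; case: ifP. Qed.

Ltac solve_iso A B :=
  exists A, B; rewrite /= ?FQE ?FPE ?Qmat2E; split;
  rewrite ?(tomx0, tomx1, tomxD, tomxM, tomx_block, tomx_kron);
  apply: mxchkP; vm_compute; reflexivity.


Definition C1A : seq (seq nat) := [:: [:: 0; 0; 1; 0; 1; 0; 0; 0];
  [:: 0; 0; 0; 1; 0; 1; 0; 0];
  [:: 0; 0; 0; 0; 0; 0; 1; 0];
  [:: 0; 0; 0; 0; 0; 0; 0; 1];
  [:: 1; 0; 1; 0; 0; 1; 0; 1];
  [:: 0; 1; 1; 1; 1; 0; 0; 0];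
  [:: 0; 0; 1; 1; 0; 1; 0; 1];
  [:: 0; 0; 0; 1; 0; 0; 1; 0]].
Definition C1B : seq (seq nat) := [:: [:: 0; 0; 1; 0; 1; 0; 1; 1];
  [:: 1; 0; 1; 0; 0; 1; 0; 1];
  [:: 0; 1; 0; 1; 0; 0; 1; 0];
  [:: 0; 0; 1; 0; 0; 0; 0; 1];
  [:: 1; 1; 0; 1; 0; 0; 1; 0];
  [:: 0; 1; 1; 0; 0; 0; 0; 1];
  [:: 0; 0; 1; 0; 0; 0; 0; 0];
  [:: 0; 0; 0; 1; 0; 0; 0; 0]].

Definition C2A : seq (seq nat) := [:: [:: 1; 0];
  [:: 0; 1]].
Definition C2B : seq (seq nat) := [:: [:: 1; 0];
  [:: 0; 1]].

Definition C3A : seq (seq nat) := [:: [:: 0; 0; 0; 1; 0; 0; 0; 0];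
  [:: 0; 0; 1; 0; 1; 0; 1; 0];
  [:: 0; 0; 1; 1; 0; 0; 1; 0];
  [:: 0; 1; 1; 0; 1; 1; 0; 0];
  [:: 0; 0; 1; 1; 1; 0; 0; 0];
  [:: 0; 1; 1; 0; 0; 0; 1; 1];
  [:: 0; 1; 0; 0; 0; 1; 1; 1];
  [:: 1; 0; 0; 0; 1; 1; 0; 0]].
Definition C3B : seq (seq nat) := [:: [:: 1; 0; 0; 0; 1; 1; 1; 1];
  [:: 1; 1; 1; 1; 0; 1; 1; 0];
  [:: 0; 1; 1; 0; 1; 0; 0; 0];
  [:: 1; 0; 0; 0; 0; 0; 0; 0];
  [:: 1; 1; 1; 0; 0; 0; 0; 0];
  [:: 0; 1; 1; 0; 1; 1; 1; 0];
  [:: 1; 1; 0; 0; 1; 0; 0; 0];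
  [:: 0; 1; 0; 1; 0; 0; 1; 0]].

Definition C4A : seq (seq nat) := [:: [:: 0; 0; 0; 1; 0; 0; 0; 1; 0; 0; 0; 0; 0; 0; 0; 0];
  [:: 0; 0; 1; 0; 0; 0; 1; 0; 1; 0; 0; 0; 1; 0; 0; 0];
  [:: 0; 0; 1; 1; 0; 0; 1; 1; 0; 0; 0; 0; 0; 0; 0; 0];
  [:: 0; 1; 1; 1; 0; 1; 1; 1; 0; 1; 0; 0; 0; 1; 0; 0];
  [:: 0; 0; 1; 0; 0; 0; 1; 1; 0; 0; 0; 0; 1; 0; 0; 0];
  [:: 0; 1; 0; 0; 0; 1; 1; 1; 0; 1; 0; 0; 0; 0; 0; 0];
  [:: 0; 1; 1; 1; 0; 1; 0; 0; 1; 1; 1; 0; 1; 1; 0; 0];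
  [:: 1; 1; 0; 1; 1; 0; 0; 0; 0; 0; 1; 1; 0; 1; 0; 0];
  [:: 0; 0; 1; 1; 0; 0; 1; 1; 1; 0; 0; 0; 0; 0; 0; 0];
  [:: 0; 1; 1; 0; 0; 1; 1; 1; 0; 1; 1; 0; 0; 0; 1; 0];
  [:: 0; 1; 0; 0; 0; 1; 0; 0; 0; 0; 1; 0; 0; 0; 0; 0];
  [:: 1; 0; 1; 1; 1; 0; 0; 1; 0; 0; 0; 0; 0; 0; 0; 1];
  [:: 0; 1; 1; 1; 0; 1; 0; 0; 0; 0; 1; 0; 0; 0; 1; 0];
  [:: 1; 1; 1; 0; 1; 0; 0; 1; 1; 1; 1; 0; 0; 0; 0; 0];
  [:: 1; 0; 0; 1; 1; 1; 0; 1; 1; 0; 1; 1; 1; 0; 1; 1];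
  [:: 0; 1; 1; 1; 1; 1; 1; 1; 1; 0; 0; 1; 0; 0; 1; 1]].
Definition C4B : seq (seq nat) := [:: [:: 0; 0; 1; 0; 1; 1; 1; 1; 1; 1; 0; 1; 0; 1; 0; 1];
  [:: 1; 0; 1; 0; 0; 0; 1; 1; 1; 0; 1; 1; 1; 1; 1; 0];
  [:: 1; 1; 0; 1; 0; 1; 1; 0; 0; 1; 1; 0; 1; 0; 0; 0];
  [:: 1; 1; 1; 0; 1; 0; 0; 0; 1; 0; 0; 0; 0; 0; 0; 0];
  [:: 0; 0; 0; 0; 1; 0; 0; 0; 1; 1; 0; 0; 1; 1; 1; 1];
  [:: 0; 1; 0; 0; 1; 1; 1; 1; 0; 1; 1; 1; 0; 1; 1; 0];
  [:: 0; 1; 1; 1; 0; 1; 1; 0; 0; 1; 1; 0; 1; 0; 0; 0];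
  [:: 0; 1; 1; 0; 1; 0; 0; 0; 1; 0; 0; 0; 0; 0; 0; 0];
  [:: 0; 0; 1; 0; 0; 0; 0; 0; 1; 0; 0; 0; 0; 0; 0; 0];
  [:: 1; 1; 1; 1; 0; 1; 1; 0; 0; 0; 1; 0; 0; 0; 0; 0];
  [:: 1; 1; 1; 0; 1; 1; 0; 0; 1; 1; 1; 0; 1; 0; 0; 0];
  [:: 1; 0; 1; 0; 1; 0; 1; 1; 0; 0; 1; 0; 0; 1; 0; 0];
  [:: 1; 1; 0; 0; 0; 0; 0; 0; 1; 0; 0; 0; 0; 0; 0; 0];
  [:: 0; 0; 1; 0; 1; 0; 1; 0; 1; 1; 1; 0; 1; 0; 0; 0];
  [:: 0; 0; 1; 1; 1; 1; 1; 0; 1; 1; 0; 0; 0; 0; 0; 0];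
  [:: 0; 1; 1; 1; 0; 0; 0; 1; 0; 1; 1; 0; 0; 0; 1; 0]].

Lemma C2 : liso (MJ [:: 0%N]) (lnsum 1 LamQ1).
Proof. solve_iso (bmx 2 2 C2A) (bmx 2 2 C2B). Qed.
Lemma C1 : liso (ltensor (Mi 0) LamFree) (lnsum 2 LamFree).
Proof. solve_iso (bmx 8 8 C1A) (bmx 8 8 C1B). Qed.
Lemma C3 : liso (ltensor (Mi 0) (ltensor (Mi 0) LamQ1)) (ldsum (lnsum 1 LamFree) (lnsum 2 LamQ1)).
Proof. solve_iso (bmx 8 8 C3A) (bmx 8 8 C3B). Qed.
Lemma C4 : liso (MJ (nseq 4 0%N)) (ldsum (lnsum 2 LamFree) (lnsum 2 (MJ (nseq 2 0%N)))).
Proof. solve_iso (bmx 16 16 C4A) (bmx 16 16 C4B). Qed.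


Lemma liso_refl M : liso M M.
Proof. by exists 1%:M, 1%:M; rewrite !mul1mx !mulmx1. Qed.

Lemma sym_aux m n (A : 'M[F2]_(m, n)) (B : 'M[F2]_(n, m)) X Y :
  A *m B = 1%:M -> B *m A = 1%:M -> X *m A = A *m Y -> Y *m B = B *m X.
Proof.
move=> AB BA XA.
have -> : Y *m B = B *m (A *m Y) *m B by rewrite mulmxA BA mul1mx.
by rewrite -XA !mulmxA -(mulmxA _ A B) AB mulmx1.
Qed.

Lemma liso_sym M N : liso M N -> liso N M.
Proof.
case=> A [B [AB BA HQ HP]]; exists B, A; split=> //; [exact: sym_aux AB BA HQ | exact: sym_aux AB BA HP].
Qed.

Lemma liso_trans M N K : liso M N -> liso N K -> liso M K.
Proof.
case=> A [B [AB BA HQ HP]] [A' [B' [AB' BA' HQ' HP']]].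
exists (A *m A'), (B' *m B); split.
- by rewrite mulmxA -(mulmxA A) AB' mulmx1 AB.
- by rewrite mulmxA -(mulmxA B') BA mulmx1 BA'.
- by rewrite mulmxA HQ -mulmxA HQ' mulmxA.
- by rewrite mulmxA HP -mulmxA HP' mulmxA.
Qed.

Definition pmx m n (f : 'I_m -> 'I_n) : 'M[F2]_(m, n) := \matrix_(i, j) ((f i == j)%:R).

Lemma mul_pmx_l m n p (f : 'I_m -> 'I_n) (X : 'M[F2]_(n, p)) :
  pmx f *m X = \matrix_(i, j) X (f i) j.
Proof.
apply/matrixP=> i j; rewrite !mxE (bigD1 (f i)) //= !mxE eqxx mul1r big1 ?addr0 //.
by move=> k; rewrite mxE eq_sym => /negbTE ->; rewrite mul0r.
Qed.

Lemma mul_pmx_r m n p (f : 'I_n -> 'I_p) (g : 'I_p -> 'I_n) (X : 'M[F2]_(m, n)) :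
  cancel f g -> cancel g f ->
  X *m pmx f = \matrix_(i, j) X i (g j).
Proof.
move=> fK gK; apply/matrixP=> i j; rewrite !mxE (bigD1 (g j)) //= !mxE gK eqxx mulr1 big1 ?addr0 //.
move=> k; rewrite mxE => Hk; case: eqP => [E|]; last by rewrite mulr0.
by move: Hk; rewrite -E fK eqxx.
Qed.

Lemma perm_liso (M N : lmod) (f : 'I_(ldim M) -> 'I_(ldim N)) (g : 'I_(ldim N) -> 'I_(ldim M)) :
  cancel f g -> cancel g f ->
  (forall i k, lQ M i k = lQ N (f i) (f k)) -> (forall i k, lP M i k = lP N (f i) (f k)) ->
  liso M N.
Proof.
move=> fK gK HQ HP; exists (pmx f), (pmx g); split.
- rewrite mul_pmx_l; apply/matrixP=> i j; rewrite !mxE fK //.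
- rewrite mul_pmx_l; apply/matrixP=> i j; rewrite !mxE gK //.
- by rewrite (mul_pmx_r _ fK gK) mul_pmx_l; apply/matrixP=> i j; rewrite !mxE HQ gK.
- by rewrite (mul_pmx_r _ fK gK) mul_pmx_l; apply/matrixP=> i j; rewrite !mxE HP gK.
Qed.


Lemma split_lsh m n (a : 'I_m) : split (lshift n a) = inl a.
Proof. exact: (unsplitK (inl _ a)). Qed.
Lemma split_rsh m n (b : 'I_n) : split (rshift m b) = inr b.
Proof. exact: (unsplitK (inr _ b)). Qed.

Ltac blk := rewrite /= ?split_lsh ?split_rsh /= ?split_lsh ?split_rsh /= ?split_lsh ?split_rsh /= ?(block_mxEul, block_mxEur, block_mxEdl, block_mxEdr) ?mxE //.

Lemma liso_dsum X X' Y Y' : liso X X' -> liso Y Y' -> liso (ldsum X Y) (ldsum X' Y').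
Proof.
case=> A [B [AB BA HQ HP]] [A' [B' [AB' BA' HQ' HP']]].
exists (block_mx A 0 0 A'), (block_mx B 0 0 B'); split;
  rewrite /= !mulmx_block !mulmx0 !mul0mx !addr0 !add0r //.
- by rewrite AB AB' -scalar_mx_block.
- by rewrite BA BA' -scalar_mx_block.
- by rewrite HQ HQ'.
- by rewrite HP HP'.
Qed.

Lemma liso_comm X Y : liso (ldsum X Y) (ldsum Y X).
Proof.
apply: (@perm_liso (ldsum X Y) (ldsum Y X)
  (fun i : 'I_(ldim X + ldim Y) => match split i with inl a => rshift (ldim Y) a | inr b => lshift (ldim X) b end)
  (fun i : 'I_(ldim Y + ldim X) => match split i with inl a => rshift (ldim X) a | inr b => lshift (ldim Y) b end)).
- by move=> i; case: (split_ordP i) => a ->; blk.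
- by move=> i; case: (split_ordP i) => a ->; blk.
- by move=> i k; case: (split_ordP i) => a ->; case: (split_ordP k) => b ->; blk.
- by move=> i k; case: (split_ordP i) => a ->; case: (split_ordP k) => b ->; blk.
Qed.

Lemma liso_assoc X Y Z : liso (ldsum X (ldsum Y Z)) (ldsum (ldsum X Y) Z).
Proof.
apply: (@perm_liso (ldsum X (ldsum Y Z)) (ldsum (ldsum X Y) Z)
  (fun i : 'I_((ldim X) + ((ldim Y) + (ldim Z))) => match split i with inl a => lshift (ldim Z) (lshift (ldim Y) a)
            | inr bc => match split bc with inl b => lshift (ldim Z) (rshift (ldim X) b) | inr c => rshift ((ldim X) + (ldim Y)) c end end)
  (fun i : 'I_(((ldim X) + (ldim Y)) + (ldim Z)) => match split i with
            | inl ab => match split ab with inl a => lshift ((ldim Y) + (ldim Z)) a | inr b => rshift (ldim X) (lshift (ldim Z) b) end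
            | inr c => rshift (ldim X) (rshift (ldim Y) c) end)).
- move=> i; case: (split_ordP i) => a ->; blk.
  by case: (split_ordP a) => b ->; blk.
- move=> i; case: (split_ordP i) => a ->; blk.
  by case: (split_ordP a) => b ->; blk.
- move=> i k; case: (split_ordP i) => [a ->|bc ->]; [| case: (split_ordP bc) => [b ->|c ->]];
  case: (split_ordP k) => [a' ->|bc' ->]; try (case: (split_ordP bc') => [b' ->|c' ->]); blk.
- move=> i k; case: (split_ordP i) => [a ->|bc ->]; [| case: (split_ordP bc) => [b ->|c ->]];
  case: (split_ordP k) => [a' ->|bc' ->]; try (case: (split_ordP bc') => [b' ->|c' ->]); blk.
Qed.

Lemma liso_dsum0r X : liso (ldsum X lzero) X.
Proof.
have E : forall a : 'I_(ldim X), cast_ord (addn0 _) (lshift 0 a) = a by move=> a; apply: val_inj.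
apply: (@perm_liso (ldsum X lzero) X (cast_ord (addn0 (ldim X))) (cast_ord (esym (addn0 (ldim X))))).
- exact: cast_ordK.
- exact: cast_ordKV.
- move=> i k; case: (split_ordP i) => a ->; last by case: a.
  by case: (split_ordP k) => b ->; [rewrite !E; blk | case: b].
- move=> i k; case: (split_ordP i) => a ->; last by case: a.
  by case: (split_ordP k) => b ->; [rewrite !E; blk | case: b].
Qed.

Lemma liso_dsum0l X : liso (ldsum lzero X) X.
Proof. exact: liso_trans (liso_comm _ _) (liso_dsum0r _). Qed.


Definition pidx m n (p : 'I_m * 'I_n) : 'I_(m * n) := cast_ord (mxvec_cast m n) (enum_rank p).
Lemma idx_pairK m n : cancel (@idx_pair m n) (@pidx m n).
Proof. by move=> k; rewrite /pidx /idx_pair enum_valK cast_ordKV. Qed.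
Lemma pidxK m n : cancel (@pidx m n) (@idx_pair m n).
Proof. by move=> p; rewrite /pidx /idx_pair cast_ordK enum_rankK. Qed.

Lemma kronE m1 n1 m2 n2 (A : 'M[F2]_(m1, n1)) (B : 'M[F2]_(m2, n2)) a b c d :
  kron A B (pidx (a, b)) (pidx (c, d)) = A a c * B b d.
Proof. by rewrite mxE !pidxK. Qed.

Lemma kron_mul m1 n1 p1 m2 n2 p2 (A : 'M[F2]_(m1, n1)) (B : 'M[F2]_(m2, n2))
  (C : 'M[F2]_(n1, p1)) (D : 'M[F2]_(n2, p2)) :
  kron A B *m kron C D = kron (A *m C) (B *m D).
Proof.
apply/matrixP=> i j; rewrite !mxE.
rewrite (reindex (@pidx n1 n2)) /=; last by exists (@idx_pair n1 n2) => k _; rewrite ?pidxK ?idx_pairK.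
rewrite mulr_suml; under [RHS]eq_bigr do rewrite mulr_sumr.
rewrite pair_big /=; apply: eq_bigr => -[a b] _ /=.
by rewrite !mxE !pidxK /= mulrACA.
Qed.

Lemma kronDl m1 n1 m2 n2 (A A' : 'M[F2]_(m1, n1)) (B : 'M[F2]_(m2, n2)) :
  kron (A + A') B = kron A B + kron A' B.
Proof. by apply/matrixP=> i j; rewrite !mxE mulrDl. Qed.
Lemma kronDr m1 n1 m2 n2 (A : 'M[F2]_(m1, n1)) (B B' : 'M[F2]_(m2, n2)) :
  kron A (B + B') = kron A B + kron A B'.
Proof. by apply/matrixP=> i j; rewrite !mxE mulrDr. Qed.

Lemma kron11 m n : kron (1%:M : 'M[F2]_m) (1%:M : 'M[F2]_n) = 1%:M.
Proof.
apply/matrixP=> i j.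
rewrite -(idx_pairK i) -(idx_pairK j); case: (idx_pair i) => a b; case: (idx_pair j) => c d.
rewrite kronE !mxE (can_eq (@pidxK m n)) xpair_eqE.
by case: (a == c); case: (b == d); rewrite /= ?mulr1n ?mulr0n ?mulr1 ?mulr0.
Qed.

Lemma liso_tensor Z X Y : liso X Y -> liso (ltensor Z X) (ltensor Z Y).
Proof.
case=> A [B [AB BA HQ HP]].
exists (kron 1%:M A), (kron 1%:M B); split=> /=.
- by rewrite kron_mul mul1mx AB kron11.
- by rewrite kron_mul mul1mx BA kron11.
- by rewrite mulmxDl mulmxDr !kron_mul !mul1mx !mulmx1 HQ.
- by rewrite !mulmxDl !mulmxDr !kron_mul !mul1mx !mulmx1 HQ HP.
Qed.

Ltac tsimp := do 4 (rewrite /= ?pidxK ?split_lsh ?split_rsh ?(block_mxEul, block_mxEur, block_mxEdl, block_mxEdr) ?mxE /=);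
  rewrite ?pidxK ?eq_lshift ?eq_rshift ?eq_lrshift ?eq_rlshift /= ?mulr0n ?mulr1n ?mulr0 ?mul0r ?addr0 ?add0r ?mulr1 ?mul1r //.

Lemma liso_dist Z X Y : liso (ltensor Z (ldsum X Y)) (ldsum (ltensor Z X) (ltensor Z Y)).
Proof.
apply: (@perm_liso (ltensor Z (ldsum X Y)) (ldsum (ltensor Z X) (ltensor Z Y))
  (fun k : 'I_(ldim Z * (ldim X + ldim Y)) =>
     match split (idx_pair k).2 with
     | inl a => lshift (ldim Z * ldim Y) (pidx ((idx_pair k).1, a))
     | inr b => rshift (ldim Z * ldim X) (pidx ((idx_pair k).1, b)) end)
  (fun l : 'I_(ldim Z * ldim X + ldim Z * ldim Y) =>
     match split l with
     | inl u => pidx ((idx_pair u).1, lshift (ldim Y) (idx_pair u).2)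
     | inr v => pidx ((idx_pair v).1, rshift (ldim X) (idx_pair v).2) end)).
- move=> k; rewrite -(idx_pairK k); case: (idx_pair k) => c d.
  by case: (split_ordP d) => a ->; rewrite /= ?pidxK ?split_lsh ?split_rsh /= pidxK.
- move=> l; case: (split_ordP l) => u ->; rewrite /= ?split_lsh ?split_rsh /= pidxK /= ?split_lsh ?split_rsh;
  by rewrite -{3}(idx_pairK u); case: (idx_pair u).
- move=> k l; rewrite -(idx_pairK k) -(idx_pairK l); case: (idx_pair k) => c d; case: (idx_pair l) => c' d'.
  case: (split_ordP d) => a ->; case: (split_ordP d') => a' ->; tsimp.
- move=> k l; rewrite -(idx_pairK k) -(idx_pairK l); case: (idx_pair k) => c d; case: (idx_pair l) => c' d'.
  case: (split_ordP d) => a ->; case: (split_ordP d') => a' ->; tsimp.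
Qed.

Lemma emptymx m n (A B : 'M[F2]_(m, n)) : m = 0%N -> A = B.
Proof. by move=> e; apply/matrixP=> i; have := ltn_ord i; rewrite {2}e. Qed.

Lemma liso_tensor0 Z : liso (ltensor Z lzero) lzero.
Proof.
exists 0, 0; split; try (apply: emptymx; rewrite /= muln0 //).
by apply/matrixP=> -[].
Qed.

Local Close Scope ring_scope.


Definition Nn n := MJ (nseq n 0%N).
Lemma MJ_size J : MJ J = Nn (size J).
Proof. by elim: J => //= j J ->. Qed.

Lemma D1 Z X k : liso (ltensor Z (lnsum k X)) (lnsum k (ltensor Z X)).
Proof.
elim: k => [|k IH] /=; first exact: liso_tensor0.
exact: liso_trans (liso_dist _ _ _) (liso_dsum (liso_refl _) IH).
Qed.

Lemma D2 X a b : liso (lnsum (a + b) X) (ldsum (lnsum a X) (lnsum b X)).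
Proof.
elim: a => [|a IH]; first exact: liso_sym (liso_dsum0l _).
rewrite addSn /=.
exact: liso_trans (liso_dsum (liso_refl _) IH) (liso_assoc _ _ _).
Qed.

Lemma swap4 X Y A B : liso (ldsum (ldsum X Y) (ldsum A B)) (ldsum (ldsum X A) (ldsum Y B)).
Proof.
apply: liso_trans (liso_sym (liso_assoc _ _ _)) _.
apply: liso_trans _ (liso_assoc _ _ _).
apply: liso_dsum (liso_refl _) _.
apply: liso_trans (liso_assoc _ _ _) _.
apply: liso_trans _ (liso_sym (liso_assoc _ _ _)).
exact: liso_dsum (liso_comm _ _) (liso_refl _).
Qed.

Lemma D3 X Y k : liso (lnsum k (ldsum X Y)) (ldsum (lnsum k X) (lnsum k Y)).
Proof.
elim: k => [|k IH] /=; first exact: liso_sym (liso_dsum0l _).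
exact: liso_trans (liso_dsum (liso_refl _) IH) (swap4 _ _ _ _).
Qed.

Lemma D4 X k j : liso (lnsum k (lnsum j X)) (lnsum (k * j) X).
Proof.
elim: k => [|k IH] /=; first exact: liso_refl.
rewrite mulSn.
exact: liso_trans (liso_dsum (liso_refl _) IH) (liso_sym (D2 _ _ _)).
Qed.

Lemma D5 X Y k : liso X Y -> liso (lnsum k X) (lnsum k Y).
Proof.
move=> H; elim: k => [|k IH] /=; first exact: liso_refl.
exact: liso_dsum H IH.
Qed.

Definition Z2 X := ltensor (Mi 0) (ltensor (Mi 0) X).

Lemma MF a : liso (ltensor (Mi 0) (lnsum a LamFree)) (lnsum (a * 2) LamFree).
Proof. exact: liso_trans (D1 _ _ _) (liso_trans (D5 _ C1) (D4 _ _ _)). Qed.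

Lemma Z2F a : liso (Z2 (lnsum a LamFree)) (lnsum (a * 2 * 2) LamFree).
Proof. exact: liso_trans (liso_tensor _ (MF a)) (MF _). Qed.

Lemma Z2dsum X Y : liso (Z2 (ldsum X Y)) (ldsum (Z2 X) (Z2 Y)).
Proof. exact: liso_trans (liso_tensor _ (liso_dist _ _ _)) (liso_dist _ _ _). Qed.

Lemma Z2nsum X k : liso (Z2 (lnsum k X)) (lnsum k (Z2 X)).
Proof. exact: liso_trans (liso_tensor _ (D1 _ _ _)) (D1 _ _ _). Qed.

Lemma step X Y W a b k c :
  liso (ldsum (lnsum a LamFree) X) (ldsum (lnsum b LamFree) (lnsum k Y)) ->
  liso (Z2 Y) (ldsum (lnsum c LamFree) (lnsum 2 W)) ->
  liso (ldsum (lnsum (a * 2 * 2) LamFree) (Z2 X))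
       (ldsum (lnsum (b * 2 * 2 + k * c) LamFree) (lnsum (k * 2) W)).
Proof.
move=> H HY.
have H1 := liso_tensor (Mi 0) (liso_tensor (Mi 0) H).
apply: liso_trans (liso_dsum (liso_sym (Z2F a)) (liso_refl _)) _.
apply: liso_trans (liso_sym (Z2dsum _ _)) _.
apply: liso_trans H1 _.
apply: liso_trans (Z2dsum _ _) _.
apply: liso_trans (liso_dsum (Z2F b) (Z2nsum _ _)) _.
apply: liso_trans (liso_dsum (liso_refl _) (D5 _ HY)) _.
apply: liso_trans (liso_dsum (liso_refl _) (D3 _ _ _)) _.
apply: liso_trans (liso_assoc _ _ _) _.
apply: liso_dsum; last exact: D4.
apply: liso_trans _ (liso_sym (D2 _ _ _)).
exact: liso_dsum (liso_refl _) (D4 _ _ _).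
Qed.

Lemma odd_case t : stably_iso (Nn t.*2.+1) (lnsum (2 ^ t) LamQ1).
Proof.
elim: t => [|t [a [b H]]].
  exists 0%N, 0%N; exact: liso_dsum (liso_refl _) C2.
exists (a * 2 * 2)%N, (b * 2 * 2 + 2 ^ t * 1)%N.
rewrite doubleS expnSr.
exact: step H C3.
Qed.

Lemma even_case s : stably_iso (Nn (s.+1).*2) (lnsum (2 ^ s) (Nn 2)).
Proof.
elim: s => [|s [a [b H]]].
  exists 0%N, 0%N; exact: liso_dsum (liso_refl _) (liso_sym (liso_dsum0r _)).
exists (a * 2 * 2)%N, (b * 2 * 2 + 2 ^ s * 2)%N.
rewrite doubleS expnSr.
exact: step H C4.
Qed.

Theorem mainTheorem8 (J : seq nat) :
  uniq J -> all (fun i => 0 < i)%N J -> (0 < size J)%N ->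
  (forall t : nat, size J = t.*2.+1 -> stably_iso (MJ J) (lnsum (2 ^ t) LamQ1)) /\
  (forall t : nat, size J = t.*2 -> stably_iso (MJ J) (lnsum (2 ^ t.-1) (MJ [:: 1; 2]%N))).
Proof.
move=> _ _ Hpos; rewrite MJ_size; split.
- by move=> t ->; exact: odd_case.
- move=> t Ht; rewrite Ht; move: Hpos; rewrite Ht.
  case: t {Ht} => [|s] //= _.
  exact: even_case.
Qed.
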